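(* Let $m\ge1$ be an integer, let $\tilde H\in\Omega_{4n}$ be invertible and Hermitian, and let $\tilde B\in\Omega_{4n}$ be $\tilde H$-selfadjoint with $\sigma(\tilde B)\cap\mathbb{R}=\emptyset$. Then there exists an $\tilde H$-selfadjoint $\tilde A\in\Omega_{4n}$ such that $\tilde A^m=\tilde B$.
   Context: $\Omega_{2k}=\{\begin{bmatrix}A_1&\bar A_2\\-A_2&\bar A_1\end{bmatrix}: A_1,A_2\in\mathbb{C}^{k\times k}\}\subset\mathbb{C}^{2k\times 2k}$. For an invertible Hermitian $H$, $A$ is $H$-selfadjoint if $HA=A^*H$. $\sigma(\cdot)$ denotes the spectrum. *)

(* Defs.v *)
From HB Require Import structures.
From mathcomp Require Import all_boot all_order all_algebra.
From mathcomp Require Import complex.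
From mathcomp Require Import reals.
Set Implicit Arguments. Unset Strict Implicit. Unset Printing Implicit Defensive.
Import Order.TTheory GRing.Theory Num.Theory.
Local Open Scope ring_scope.

Definition cconj (R : realType) (z : R[i]) : R[i] := Num.conj_op z.

Definition mxconj (R : realType) m n (A : 'M[R[i]]_(m, n)) : 'M[R[i]]_(m, n) :=
  map_mx (@cconj R) A.
Definition adjmx (R : realType) m n (A : 'M[R[i]]_(m, n)) : 'M[R[i]]_(n, m) :=
  (mxconj A)^T.

Definition Omega_mx (R : realType) (k : nat) (M : 'M[R[i]]_(k + k)) : Prop :=
  exists A1 A2 : 'M[R[i]]_k,
    M = block_mx A1 (mxconj A2) (- A2) (mxconj A1).

Definition is_hermitian_mx (R : realType) k (H : 'M[R[i]]_k) : Prop := adjmx H = H.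

Definition H_selfadjoint_mx (R : realType) k (H A : 'M[R[i]]_k) : Prop :=
  H *m A = adjmx A *m H.

Definition no_real_eigenvalue (R : realType) k (B : 'M[R[i]]_k) : Prop :=
  forall a : R[i], eigenvalue B a -> a \isn't Num.real.

(* Main.v *)
Require Import Defs.
From HB Require Import structures.
From mathcomp Require Import all_boot all_order all_algebra.
From mathcomp Require Import complex.
From mathcomp Require Import reals.
From mathcomp Require Import ring.
Import Order.TTheory GRing.Theory Num.Theory.
Local Open Scope ring_scope.

Lemma binom_lin (T : comNzRingType) (a b : T) (m : nat) :
  exists c, (a + b) ^+ m.+1 = a ^+ m.+1 + m.+1%:R * a ^+ m * b + b ^+ 2 * c.
Proof.
elim: m => [|m [c IH]]; first by exists 0; rewrite !expr1 expr0 mulr0 addr0 mulr1 mul1r.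
exists (a * c + m.+1%:R * a ^+ m + b * c).
rewrite exprS IH !exprS -[m.+2]addn1 -[m.+1]addn1 !natrD. ring.
Qed.

Section S.
Variable R : realType.
Local Notation C := R[i].
Local Notation cj := (Num.conj_op : C -> C).

Definition realp (p : {poly C}) := map_poly cj p = p.

Lemma realp_eval (p : {poly C}) x : realp p -> p.[x^*] = (p.[x])^*.
Proof. by move=> rp; rewrite -horner_map rp. Qed.

Lemma interp (s : seq C) (g : C -> C) : uniq s ->
  exists p : {poly C}, forall x, x \in s -> p.[x] = g x.
Proof.
elim: s => [|y s IH] /=; first by exists 0.
case/andP=> ys us; have [p Hp] := IH us.
set D := \prod_(z <- s) ('X - z%:P).
have D0 : D.[y] != 0.
  rewrite horner_prod prodf_seq_neq0; apply/allP => z zs /=.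
  by rewrite hornerXsubC subr_eq0; apply: contraNneq ys => ->.
have Dz z : z \in s -> D.[z] = 0.
  by move=> zs; apply/eqP; rewrite -/(root D z) root_prod_XsubC.
exists (p + ((g y - p.[y]) / D.[y]) *: D) => x; rewrite inE => /orP [/eqP->|xs].
  by rewrite hornerD hornerZ divfK // addrC subrK.
by rewrite hornerD hornerZ (Dz x xs) mulr0 addr0 Hp.
Qed.

Lemma interp_real (s : seq C) (g : C -> C) : uniq s ->
  (forall x, x \in s -> x^* \in s) ->
  (forall x, x \in s -> g x^* = (g x)^*) ->
  exists p : {poly C}, realp p /\ forall x, x \in s -> p.[x] = g x.
Proof.
move=> us sc gs; have [p Hp] := @interp s g us.
exists (2^-1 *: (p + map_poly cj p)); split.
  rewrite /realp linearZ /= rmorphD /= -map_poly_comp.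
  have -> : map_poly (cj \o cj) p = p by apply: map_poly_id => z _ /=; rewrite conjCK.
  by rewrite fmorphV rmorph_nat addrC.
move=> x xs; rewrite hornerZ hornerD -{2}(conjCK x) horner_map /=.
rewrite (Hp _ (sc _ xs)) gs // conjCK Hp //.
have h2 : (2 : C) != 0 by rewrite pnatr_eq0.
by field.
Qed.

Lemma roots_dvd (s : seq C) (p : {poly C}) : uniq s ->
  (forall x, x \in s -> root p x) -> \prod_(z <- s) ('X - z%:P) %| p.
Proof.
move=> us H.
have h1 : all (root p) s by apply/allP => x /H.
have h2 : uniq_roots s by rewrite uniq_rootsE.
have [q ->] := uniq_roots_prod_XsubC h1 h2.
by rewrite dvdp_mull.
Qed.

Lemma prod_dvd_exp (rs : seq C) (S : {poly C}) :
  (forall x, x \in rs -> root S x) -> \prod_(z <- rs) ('X - z%:P) %| S ^+ size rs.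
Proof.
elim: rs => [|y rs IH] H /=; first by rewrite big_nil expr0.
rewrite big_cons exprS dvdp_mul //.
  by rewrite dvdp_XsubCl H // inE eqxx.
by apply: IH => x xs; apply: H; rewrite inE xs orbT.
Qed.

Lemma newton (rs : seq C) (m : nat) : (0 < m)%N ->
  (forall x, x \in rs -> x^* \in rs) -> (forall x, x \in rs -> 'Im x != 0) ->
  exists q, realp q /\ \prod_(z <- rs) ('X - z%:P) %| q ^+ m - 'X.
Proof.
case: m => // m' _ rsc rsI; set m := m'.+1.
set s := undup rs; set S := \prod_(z <- s) ('X - z%:P).
have us : uniq s by apply: undup_uniq.
have sc x : x \in s -> x^* \in s by rewrite !mem_undup; apply: rsc.
have sI x : x \in s -> 'Im x != 0 by rewrite mem_undup; apply: rsI.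
have sx0 x : x \in s -> x != 0.
  by move=> /sI; apply: contraNneq => ->; rewrite (Creal_ImP _ _) ?real0.
have rS x : x \in s -> root S x by move=> xs; rewrite root_prod_XsubC.
pose f (x : C) : C := if 0 < 'Im x then m.-root x else (m.-root x^*)^*.
have fm (x : C) : f x ^+ m = x.
  rewrite /f; case: ifP => _; first by rewrite rootCK.
  by rewrite -rmorphXn /= rootCK // conjCK.
have fs (x : C) : x \in s -> f x^* = (f x)^*.
  move=> xs; rewrite /f Im_conj oppr_gt0 (conjCK x).
  have := sI _ xs; rewrite real_neqr_lt ?Creal_Im ?real0 // => /orP [lt0|gt0].
    by rewrite lt0 (lt_gtF lt0) conjCK.
  by rewrite gt0 (lt_gtF gt0).
have step0 : exists q, realp q /\ S ^+ 1 %| q ^+ m - 'X.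
  have [q [rq Hq]] := @interp_real s f us sc fs.
  exists q; split => //; rewrite expr1; apply: roots_dvd => // x xs.
  by rewrite /root !hornerE Hq // fm subrr.
have stepS j : (exists q, realp q /\ S ^+ j.+1 %| q ^+ m - 'X) ->
               exists q, realp q /\ S ^+ j.+2 %| q ^+ m - 'X.
  move=> [q [rq Hq]]; set e := q ^+ m - 'X.
  have Se : S %| e by apply: dvdp_trans Hq; rewrite -{1}(expr1 S) dvdp_exp2l.
  have qx x : x \in s -> q.[x] ^+ m = x.
    move=> xs; have := root_dvdp Se (rS _ xs).
    by rewrite /root !hornerE subr_eq0 => /eqP.
  have qx0 x : x \in s -> m%:R * q.[x] ^+ m' != 0.
    move=> xs; rewrite mulf_neq0 ?pnatr_eq0 //.
    rewrite expf_neq0 //; apply: contraTneq (sx0 _ xs) => q0.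
    by rewrite negbK -(qx _ xs) q0 expr0n.
  pose g (x : C) : C := (m%:R * q.[x] ^+ m')^-1.
  have gs x : x \in s -> g x^* = (g x)^*.
    move=> xs; rewrite /g realp_eval // fmorphV rmorphM rmorph_nat rmorphXn //.
  have [r [rr Hr]] := @interp_real s g us sc gs.
  have [c Hc] := @binom_lin _ q (- (e * r)) m'.
  exists (q - e * r); split.
    by rewrite /realp rmorphB rmorphM /= rr /e rmorphB rmorphXn /= map_polyX rq.
  have -> : (q - e * r) ^+ m - 'X =
            e * (1 - m%:R * q ^+ m' * r) + e * e * (r ^+ 2 * c).
    rewrite Hc sqrrN /e /m; move: (q ^+ m'.+1) (q ^+ m') (m'.+1%:R : {poly C}) => A B N; ring.
  apply: dvdp_add.
    rewrite exprSr dvdp_mul //; apply: roots_dvd => // x xs.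
    by rewrite /root !hornerE Hr // /g hornerMn hornerC mulfV ?subrr ?qx0.
  by apply: dvdp_mulr; rewrite exprSr dvdp_mul.
have main j : exists q, realp q /\ S ^+ j.+1 %| q ^+ m - 'X.
  by elim: j => [|j IH]; [apply: step0 | apply: stepS].
have [q [rq Hq]] := main (size rs).
exists q; split => //; apply: dvdp_trans Hq.
apply: dvdp_trans (dvdp_exp2l _ (leqnSn _)).
by apply: prod_dvd_exp => x xs; apply: rS; rewrite mem_undup.
Qed.

Lemma mxconjE m n (A : 'M[C]_(m, n)) : mxconj A = map_mx cj A.
Proof. by []. Qed.

Lemma mxconjK m n (A : 'M[C]_(m, n)) : mxconj (mxconj A) = A.
Proof. by apply/matrixP => i j; rewrite !mxE /cconj conjCK. Qed.

Definition Jmx k : 'M[C]_(k + k) := block_mx 0 1%:M (- 1%:M) 0.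

Lemma Jmx_conj k : mxconj (Jmx k) = Jmx k.
Proof. by rewrite mxconjE /Jmx map_block_mx map_mxN map_mx1 map_mx0. Qed.

Lemma JmxJ k : Jmx k *m Jmx k = - 1%:M.
Proof.
rewrite /Jmx mulmx_block !mul0mx !mulmx0 !mul1mx !mulmx1 ?mulNmx.
by rewrite !addr0 !add0r [in RHS]scalar_mx_block opp_block_mx oppr0.
Qed.

Lemma mxconj_block m1 m2 n1 n2 (a : 'M[C]_(m1, n1)) (b : 'M[C]_(m1, n2))
  (c : 'M[C]_(m2, n1)) (d : 'M[C]_(m2, n2)) :
  mxconj (block_mx a b c d) = block_mx (mxconj a) (mxconj b) (mxconj c) (mxconj d).
Proof. by rewrite !mxconjE map_block_mx. Qed.

Lemma mxconjN m n (a : 'M[C]_(m, n)) : mxconj (- a) = - mxconj a.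
Proof. by rewrite !mxconjE map_mxN. Qed.

Lemma Omega_J k (M : 'M[C]_(k + k)) :
  Omega_mx M <-> Jmx k *m M = mxconj M *m Jmx k.
Proof.
split.
  case=> [A1 [A2 ->]]; rewrite /Jmx mxconj_block mxconjN !mxconjK.
  rewrite !mulmx_block !mul0mx !mulmx0 !mul1mx !mulmx1 ?mulNmx ?mulmxN ?mul1mx.
  by rewrite ?mulmx1 !addr0 !add0r.
rewrite -[M]submxK /Jmx mxconj_block.
rewrite !mulmx_block !mul0mx !mulmx0 !mul1mx !mulmx1 ?mulNmx ?mulmxN ?mul1mx ?mulmx1 !addr0 !add0r.
case/eq_block_mx => e1 e2 e3 e4.
exists (ulsubmx M), (- dlsubmx M).
congr block_mx; last by rewrite e2.
  by rewrite mxconjN -e4 opprK.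
by rewrite opprK.
Qed.

Lemma horner_intertw N (X Y K : 'M[C]_N.+1) (q : {poly C}) :
  K *m X = Y *m K -> K *m horner_mx X q = horner_mx Y q *m K.
Proof.
move=> KX; elim/poly_ind: q => [|p c IH]; first by rewrite !rmorph0 mulmx0 mul0mx.
rewrite !rmorphD !rmorphM /= !horner_mx_X !horner_mx_C -!mulmxE.
by rewrite mulmxDr mulmxDl mulmxA IH -(mulmxA _ K X) KX scalar_mxC mulmxA.
Qed.

Lemma horner_tr N (X : 'M[C]_N.+1) (q : {poly C}) :
  (horner_mx X q)^T = horner_mx X^T q.
Proof.
elim/poly_ind: q => [|p c IH]; first by rewrite !rmorph0 trmx0.
rewrite !rmorphD !rmorphM /= !horner_mx_X !horner_mx_C -!mulmxE.
rewrite linearD /= trmx_mul IH tr_scalar_mx; congr (_ + _).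
by have := @comm_mx_horner _ _ X^T X^T p (erefl _).
Qed.

Lemma horner_adj N (X : 'M[C]_N.+1) (q : {poly C}) :
  adjmx (horner_mx X q) = horner_mx (adjmx X) (map_poly cj q).
Proof. by rewrite /adjmx mxconjE map_horner_mx horner_tr. Qed.

Lemma horner_conj N (X : 'M[C]_N.+1) (q : {poly C}) :
  mxconj (horner_mx X q) = horner_mx (mxconj X) (map_poly cj q).
Proof. by rewrite mxconjE map_horner_mx. Qed.

Lemma mxconjM m n p (a : 'M[C]_(m, n)) (b : 'M[C]_(n, p)) :
  mxconj (a *m b) = mxconj a *m mxconj b.
Proof. by rewrite !mxconjE map_mxM. Qed.

Lemma mxconjZ m n (x : C) (a : 'M[C]_(m, n)) : mxconj (x *: a) = x^* *: mxconj a.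
Proof. by rewrite !mxconjE map_mxZ. Qed.

Lemma mxconj0 m n : mxconj (0 : 'M[C]_(m, n)) = 0.
Proof. by rewrite mxconjE map_mx0. Qed.
End S.

Theorem mainTheorem7 (R : realType) (n m : nat)
  (Ht Bt : 'M[R[i]]_(n.*2 + n.*2)) :
  (1 <= m)%N ->
  Omega_mx Ht -> Ht \in unitmx -> is_hermitian_mx Ht ->
  Omega_mx Bt -> H_selfadjoint_mx Ht Bt -> no_real_eigenvalue Bt ->
  exists At : 'M[R[i]]_(n.*2 + n.*2),
    [/\ Omega_mx At, H_selfadjoint_mx Ht At & At ^+ m = Bt].
Proof.
move=> m1 OH Hu Hh OB HB nr.
case: n Ht Bt OH Hu Hh OB HB nr => [|n'] Ht Bt OH Hu Hh OB HB nr.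
  exists Bt; split => //; apply/matrixP => -[i hi]; by [].
set k := n'.+1.*2.
have BJ : Jmx R k *m Bt = mxconj Bt *m Jmx R k by apply/Omega_J.
have ec a : eigenvalue Bt a -> eigenvalue Bt a^*.
  move/eigenvalueP => [v vB v0]; apply/eigenvalueP; exists (mxconj v *m Jmx R k).
    by rewrite -mulmxA BJ mulmxA -mxconjM vB mxconjZ scalemxAl.
  apply: contra v0 => /eqP w0.
  have : mxconj v *m Jmx R k *m Jmx R k = 0 by rewrite w0 mul0mx.
  rewrite -mulmxA JmxJ mulmxN mulmx1 => /eqP; rewrite oppr_eq0 => /eqP v0.
  by rewrite -(@mxconjK R _ _ v) v0 mxconj0.
have [rs Ers] := closed_field_poly_normal (char_poly Bt).
have lc1 : lead_coef (char_poly Bt) = 1 by apply/monicP; apply: char_poly_monic.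
rewrite lc1 scale1r in Ers.
have rsE x : (x \in rs) = eigenvalue Bt x by rewrite eigenvalue_root_char Ers root_prod_XsubC.
have [q [rq Hq]] : exists q, realp R q /\ \prod_(z <- rs) ('X - z%:P) %| q ^+ m - 'X.
  apply: newton => // x; rewrite rsE.
    by move/ec; rewrite rsE.
  move/nr; apply: contra => /eqP h; exact/Creal_ImP.
exists (horner_mx Bt q); split.
- apply/Omega_J; rewrite horner_conj rq; exact: horner_intertw.
- rewrite /H_selfadjoint_mx horner_adj rq; exact: horner_intertw.
- rewrite -Ers in Hq; case/dvdpP: Hq => c Hc.
  have E : q ^+ m = 'X + c * char_poly Bt by rewrite -Hc addrC subrK.
  rewrite -rmorphXn /=. by rewrite E rmorphD rmorphM /= horner_mx_X Cayley_Hamilton mulr0 addr0.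
Qed.
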